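(* Let $\lambda=(\lambda_1,\ldots,\lambda_n)\in\mathbb{C}^n$ have pairwise distinct entries. Then for every $l\in\{1,\ldots,n\}$, every $k\in\{0,\ldots,n-1\}$ and every $t$, $$\dot\nu_{k,\lambda}(t)=\lambda_l\,\nu_{k,\lambda}(t)-\lambda_l\,\nu_{k,\lambda_{\neg l}}(t)+\nu_{k-1,\lambda_{\neg l}}(t),$$ where $\lambda_{\neg l}=(\lambda_1,\ldots,\lambda_{l-1},\lambda_{l+1},\ldots,\lambda_n)$.
   Context: For a tuple $\mu=(\mu_1,\ldots,\mu_p)$ of distinct complex numbers, $V_\mu$ is the $p\times p$ Vandermonde matrix with $(i,j)$ entry $\mu_j^{i-1}$ and the Vandermonde basis functions are defined by $[\nu_{0,\mu}(t),\ldots,\nu_{p-1,\mu}(t)]=[e^{\mu_1 t},\ldots,e^{\mu_p t}]V_\mu^{-1}$; by convention $\nu_{k,\mu}(t)=0$ for $k<0$ and for $k\ge p$ (in particular all $\nu_{k,\mu}\equiv 0$ when $\mu$ is empty). *)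

(* Defs.v *)
From HB Require Import structures.
From mathcomp Require Import all_boot all_order all_algebra.
From mathcomp Require Import complex.
From mathcomp Require Import all_classical all_reals all_analysis.
Set Implicit Arguments. Unset Strict Implicit. Unset Printing Implicit Defensive.
Import Order.TTheory GRing.Theory Num.Theory.
Import numFieldNormedType.Exports.
Local Open Scope ring_scope.
Local Open Scope complex_scope.

Section VandermondeBasis.
Variable R : realType.
Local Notation C := R[i].

Definition cexp (z : C) : C :=
  (expR (complex.Re z) * cos (complex.Im z)) +i* (expR (complex.Re z) * sin (complex.Im z)).

(** the Vandermonde matrix V_mu, (i,j) entry mu_j^(i-1) (0-indexed: mu_j^i) *)
Definition Vmat (mu : seq C) : 'M[C]_(size mu) :=
  Vandermonde (size mu) (\row_(j < size mu) mu`_j).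

Definition exprow (mu : seq C) (t : R) : 'rV[C]_(size mu) :=
  \row_(j < size mu) cexp (mu`_j * t%:C).

(** Vandermonde basis functions nu_{k,mu}, with nu_{k,mu} = 0 for k < 0
    or k >= size mu *)
Definition nu (k : int) (mu : seq C) (t : R) : C :=
  match k with
  | Posz k' =>
      match insub k' : option 'I_(size mu) with
      | Some j => (exprow mu t *m invmx (Vmat mu)) 0 j
      | None => 0
      end
  | Negz _ => 0
  end.

Definition remove_at (l : nat) (lam : seq C) : seq C :=
  take l lam ++ drop l.+1 lam.

Definition has_cderiv (f : R -> C) (t : R) (d : C) : Prop :=
  is_derive t 1 (fun s => complex.Re (f s)) (complex.Re d) /\
  is_derive t 1 (fun s => complex.Im (f s)) (complex.Im d).

End VandermondeBasis.

(* Main.v *)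
Require Import Defs.
From HB Require Import structures.
From mathcomp Require Import all_boot all_order all_algebra.
From mathcomp Require Import complex.
From mathcomp Require Import all_classical all_reals all_analysis.
From mathcomp Require Import ring lra zify.
Import Order.TTheory GRing.Theory Num.Theory.
Import numFieldNormedType.Exports.
Local Open Scope ring_scope.
Local Open Scope complex_scope.

Section A.
Variable R : realType.
Local Notation C := R[i].

Lemma ReD (x y : C) : complex.Re (x + y) = complex.Re x + complex.Re y.
Proof. by case: x; case: y. Qed.
Lemma ImD (x y : C) : complex.Im (x + y) = complex.Im x + complex.Im y.
Proof. by case: x; case: y. Qed.
Lemma ReM (x y : C) : complex.Re (x * y) = complex.Re x * complex.Re y - complex.Im x * complex.Im y.
Proof. by case: x; case: y. Qed.
Lemma ImM (x y : C) : complex.Im (x * y) = complex.Re x * complex.Im y + complex.Im x * complex.Re y.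
Proof. by case: x; case: y. Qed.

Lemma hcd_ext (f g : R -> C) t d : (forall s, f s = g s) -> has_cderiv f t d -> has_cderiv g t d.
Proof. by move=> e; have -> : f = g by apply/funext. Qed.

Lemma hcdD (f g : R -> C) t d e : has_cderiv f t d -> has_cderiv g t e ->
  has_cderiv (fun s => f s + g s) t (d + e).
Proof.
move=> [f1 f2] [g1 g2]; split.
  have -> : (fun s => complex.Re (f s + g s)) = (fun s => complex.Re (f s)) + (fun s => complex.Re (g s)).
    by apply/funext => s; rewrite ?ReD ?ImD.
  by rewrite ?ReD ?ImD; apply: is_deriveD.
have -> : (fun s => complex.Im (f s + g s)) = (fun s => complex.Im (f s)) + (fun s => complex.Im (g s)).
  by apply/funext => s; rewrite ?ReD ?ImD.
by rewrite ?ReD ?ImD; apply: is_deriveD.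
Qed.

Lemma isd_ext (f g : R -> R) (t d d' : R) : (forall s, f s = g s) -> d = d' -> is_derive t 1 f d -> is_derive t 1 g d'.
Proof. by move=> e <-; have -> : f = g by apply/funext. Qed.

Lemma hcdMl (f : R -> C) t d (c : C) : has_cderiv f t d ->
  has_cderiv (fun s => f s * c) t (d * c).
Proof.
move=> [f1 f2]; split.
  apply: isd_ext (is_deriveB (is_deriveZ (complex.Re c) f1) (is_deriveZ (complex.Im c) f2)).
    by move=> s; rewrite ReM !fctE; congr (_ - _); apply: mulrC.
  by rewrite ReM; congr (_ - _); apply: mulrC.
apply: isd_ext (is_deriveD (is_deriveZ (complex.Im c) f1) (is_deriveZ (complex.Re c) f2)).
  by move=> s; rewrite ImM !fctE; congr (_ + _); apply: mulrC.
by rewrite ImM; congr (_ + _); apply: mulrC.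
Qed.

Lemma hcd_sum n (F : 'I_n -> R -> C) t (d : 'I_n -> C) :
  (forall i, has_cderiv (F i) t (d i)) ->
  has_cderiv (fun s => \sum_(i < n) F i s) t (\sum_(i < n) d i).
Proof.
elim: n F d => [|n IH] F d H.
  apply: (@hcd_ext (fun _ => 0)) => [s|]; first by rewrite big_ord0.
  by rewrite big_ord0; split; apply: isd_ext (is_derive_cst (0:R) t 1).
apply: (@hcd_ext (fun s => \sum_(i < n) F (widen_ord (leqnSn n) i) s + F ord_max s)).
  by move=> s; rewrite big_ord_recr.
rewrite big_ord_recr; apply: hcdD; last exact: H.
by apply: (IH (fun i => F (widen_ord (leqnSn n) i))) => i; exact: H.
Qed.

Lemma dlin (a t : R) : is_derive t 1 (fun s => a * s) a.
Proof.
apply: isd_ext (is_deriveZ a (is_derive_id t (1:R))) => //.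
exact: mulr1.
Qed.

Lemma hcd_exp (mu : C) t :
  has_cderiv (fun s => cexp (mu * s%:C)) t (mu * cexp (mu * t%:C)).
Proof.
case: mu => a b; rewrite /cexp /=.
have E1 : is_derive t 1 (fun s => expR (a * s)) (expR (a * t) * a).
  exact: (is_derive1_comp (f := expR) (g := fun s => a * s) (is_derive_expR _) (dlin a t)).
have C1 : is_derive t 1 (fun s => cos (b * s)) (- sin (b * t) * b).
  exact: (is_derive1_comp (f := cos) (g := fun s => b * s) (is_derive_cos _) (dlin b t)).
have S1 : is_derive t 1 (fun s => sin (b * s)) (cos (b * t) * b).
  exact: (is_derive1_comp (f := sin) (g := fun s => b * s) (is_derive_sin _) (dlin b t)).
split.
  apply: isd_ext (is_deriveM E1 C1).
    by move=> s; rewrite !mulr0 subr0 add0r.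
  rewrite /GRing.scale /= !mulr0 subr0 add0r; ring.
apply: isd_ext (is_deriveM E1 S1).
  by move=> s; rewrite !mulr0 subr0 add0r.
rewrite /GRing.scale /= !mulr0 subr0 add0r; ring.
Qed.

Lemma Vunit (mu : seq C) : uniq mu -> Vmat mu \in unitmx.
Proof.
move=> u; rewrite unitmxE unitfE /Vmat det_Vandermonde.
apply/prodf_neq0 => i _; apply/prodf_neq0 => j ij; rewrite !mxE subr_eq0.
by rewrite nth_uniq // gtn_eqF.
Qed.

Lemma nuE (mu : seq C) k (hk : (k < size mu)%N) t :
  nu (Posz k) mu t = (exprow mu t *m invmx (Vmat mu)) 0 (Ordinal hk).
Proof. by rewrite /nu insubT. Qed.

Lemma nu_ge (mu : seq C) k t : (size mu <= k)%N -> nu (Posz k) mu t = 0.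
Proof. by move=> h; rewrite /nu insubF // ltnNge h. Qed.

Lemma nuE2 (mu : seq C) k (hk : (k < size mu)%N) t :
  nu (Posz k) mu t = \sum_(j < size mu) cexp (mu`_j * t%:C) * invmx (Vmat mu) j (Ordinal hk).
Proof. by rewrite nuE mxE; apply: eq_bigr => j _; rewrite mxE. Qed.

Lemma F1 (mu : seq C) t x : uniq mu -> x \in mu ->
  \sum_(k < size mu) nu (Posz k) mu t * x ^+ k = cexp (x * t%:C).
Proof.
move=> u xm; have hj : (index x mu < size mu)%N by rewrite index_mem.
have := congr1 (fun M : matrix C 1 (size mu) => M 0 (Ordinal hj)) (mulmxKV (Vunit mu u) (exprow mu t)).
rewrite /= [RHS]mxE /= nth_index // mxE => <-.
by apply: eq_bigr => k _; rewrite valK /Vmat !mxE nth_index.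
Qed.

Lemma rm_size (lam : seq C) l : (l < size lam)%N -> size (remove_at l lam) = (size lam).-1.
Proof. by move=> h; rewrite /remove_at size_cat size_take size_drop h; lia. Qed.

Lemma rm_split {lam : seq C} {l} : (l < size lam)%N ->
  lam = take l lam ++ lam`_l :: drop l.+1 lam.
Proof. by move=> h; rewrite -(drop_nth 0 h) cat_take_drop. Qed.

Lemma rm_uniq (lam : seq C) l : uniq lam -> (l < size lam)%N -> uniq (remove_at l lam).
Proof.
move=> u h; rewrite (rm_split h) in u; apply: subseq_uniq u.
by rewrite /remove_at cat_subseq // subseq_cons.
Qed.

Lemma rm_mem (lam : seq C) l j : uniq lam -> (l < size lam)%N -> (j < size lam)%N ->
  j != l -> lam`_j \in remove_at l lam.
Proof.
move=> u hl hj jl; have : lam`_j \in take l lam ++ lam`_l :: drop l.+1 lam by rewrite -(rm_split hl) mem_nth.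
rewrite mem_cat in_cons.
case/or3P => [H|/eqP E|H].
- by rewrite /remove_at mem_cat H.
- by move: E => /eqP; rewrite nth_uniq // (negbTE jl).
- by rewrite /remove_at mem_cat H orbT.
Qed.

Lemma sumB (mu : seq C) x t N : N = (size mu).+1 ->
  \sum_(k < N) nu (Posz k) mu t * x ^+ k = \sum_(k < size mu) nu (Posz k) mu t * x ^+ k.
Proof. by move=> ->; rewrite big_ord_recr nu_ge // mul0r Monoid.mulm1. Qed.

Lemma sumC (mu : seq C) x t N : N = (size mu).+1 ->
  \sum_(k < N) nu (Posz k - 1) mu t * x ^+ k = x * \sum_(k < size mu) nu (Posz k) mu t * x ^+ k.
Proof.
move=> ->; rewrite big_ord_recl /= mul0r add0r mulr_sumr; apply: eq_bigr => k _.
rewrite /bump leq0n add1n subn1 /= exprS; ring.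
Qed.
End A.

Theorem proposition5 (R : realType) (lam : seq R[i]) (hlam : uniq lam)
    (l : nat) (hl : (l < size lam)%N) (k : nat) (hk : (k < size lam)%N) (t : R) :
  has_cderiv (nu (Posz k) lam) t
    (lam`_l * nu (Posz k) lam t
     - lam`_l * nu (Posz k) (remove_at l lam) t
     + nu (Posz k - 1) (remove_at l lam) t).
Proof.
set lam' := remove_at l lam.
set W := invmx (Vmat lam).
pose dr := \row_(j < size lam) (lam`_j * cexp (lam`_j * t%:C)).
pose w := \row_(k < size lam) (lam`_l * nu (Posz k) lam t - lam`_l * nu (Posz k) lam' t
   + nu (Posz k - 1) lam' t).
have hs : size lam = (size lam').+1 by rewrite rm_size // prednK // (leq_ltn_trans _ hl).
have key : w *m Vmat lam = dr.
  apply/rowP => j; rewrite !mxE.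
  set x := lam`_j.
  rewrite (eq_bigr (fun k : 'I_(size lam) => lam`_l * (nu (Posz k) lam t * x ^+ k)
     - lam`_l * (nu (Posz k) lam' t * x ^+ k) + nu (Posz k - 1) lam' t * x ^+ k)); last first.
    by move=> i _; rewrite /Vmat !mxE; ring.
  rewrite big_split sumrB /= -!mulr_sumr (F1 _ _ _ _ hlam (mem_nth 0 (ltn_ord j))).
  rewrite (sumB _ _ _ _ _ hs) (sumC _ _ _ _ _ hs).
  have [E|NE] := eqVneq (j : nat) l.
    by rewrite /x E; ring.
  by rewrite (F1 _ _ _ _ (rm_uniq _ _ _ hlam hl) (rm_mem _ _ _ _ hlam hl (ltn_ord j) NE)); ring.
have wE : w = dr *m W by rewrite -key mulmxK // Vunit.
have T : lam`_l * nu (Posz k) lam t - lam`_l * nu (Posz k) lam' t + nu (Posz k - 1) lam' t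
   = \sum_(j < size lam) (lam`_j * cexp (lam`_j * t%:C)) * W j (Ordinal hk).
  have -> : lam`_l * nu (Posz k) lam t - lam`_l * nu (Posz k) lam' t + nu (Posz k - 1) lam' t
     = w 0 (Ordinal hk) by rewrite mxE.
  by rewrite wE mxE; apply: eq_bigr => j _; rewrite mxE.
rewrite T.
apply: (@hcd_ext _ (fun s => \sum_(j < size lam) cexp (lam`_j * s%:C) * W j (Ordinal hk))).
  by move=> s; rewrite nuE2.
apply: hcd_sum => j; apply: hcdMl; exact: hcd_exp.
Qed.
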